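(* Let $\kappa$ be an infinite cardinal, let $(A,B,C)\in S\setminus B_0$ where $B_0=\{(X,\,X\cap Z,\,Z): X,Z\in\mathcal{F}(\kappa),\ X\sim Z\}$, and let $(A',B',C')$ be a complement of $(A,B,C)$ in $S$. If $B\subseteq A$, then $B'\not\subseteq A'$.
   Context: $\mathcal{F}(\kappa)$ is the Boolean lattice of subsets $X\subseteq\kappa$ that are finite or cofinite. For $X,Z\in\mathcal{F}(\kappa)$, $X\sim Z$ means that either both $X,Z$ are finite or both $\kappa\setminus X,\kappa\setminus Z$ are finite. Let $\mu(A,B,C)=(A\cap B)\cup(A\cap C)\cup(B\cap C)$; a triple is balanced if $A\cap B=A\cap C=B\cap C$. $S$ is the set of balanced triples $(A,B,C)\in\mathcal{F}(\kappa)^3$ with $C\setminus\mu(A,B,C)$ finite, ordered componentwise; it is a bounded lattice with componentwise meet, join $(A,B,C)\vee(A',B',C')=(U_1\cup m,U_2\cup m,U_3\cup m)$ where $U_1=A\cup A'$, $U_2=B\cup B'$, $U_3=C\cup C'$, $m=\mu(U_1,U_2,U_3)$, and bounds $(\emptyset,\emptyset,\emptyset)$, $(\kappa,\kappa,\kappa)$. A complement of $x$ in $S$ is $y\in S$ with $x\wedge y$ the least and $x\vee y$ the greatest element. (In the paper the set $B_0$ is called $B$.) *)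

(* Defs.v *)
From mathcomp Require Import all_boot.
From mathcomp Require Import boolp classical_sets cardinality.
Set Implicit Arguments. Unset Strict Implicit. Unset Printing Implicit Defensive.
Local Open Scope classical_set_scope.

(* The infinite cardinal kappa is modelled by an infinite type T;
   subsets of kappa are [set T]. *)

Definition finco (T : Type) (X : set T) : Prop :=
  finite_set X \/ finite_set (~` X).

Definition simF (T : Type) (X Z : set T) : Prop :=
  (finite_set X /\ finite_set Z) \/ (finite_set (~` X) /\ finite_set (~` Z)).

Definition mu (T : Type) (A B C : set T) : set T :=
  (A `&` B) `|` (A `&` C) `|` (B `&` C).

Definition balanced (T : Type) (A B C : set T) : Prop :=
  A `&` B = A `&` C /\ A `&` C = B `&` C.

Definition triple (T : Type) := (set T * set T * set T)%type.

Definition inS (T : Type) (x : triple T) : Prop :=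
  let: (A, B, C) := x in
  [/\ finco A, finco B, finco C, balanced A B C & finite_set (C `\` mu A B C)].

Definition inB0 (T : Type) (x : triple T) : Prop :=
  exists X Z : set T, [/\ finco X, finco Z, simF X Z & x = (X, X `&` Z, Z)].

Definition meetS (T : Type) (x y : triple T) : triple T :=
  let: (A, B, C) := x in let: (A', B', C') := y in
  (A `&` A', B `&` B', C `&` C').

Definition joinS (T : Type) (x y : triple T) : triple T :=
  let: (A, B, C) := x in let: (A', B', C') := y in
  let U1 := A `|` A' in let U2 := B `|` B' in let U3 := C `|` C' in
  let m := mu U1 U2 U3 in
  (U1 `|` m, U2 `|` m, U3 `|` m).

Definition botS (T : Type) : triple T := (set0, set0, set0).
Definition topS (T : Type) : triple T := (setT, setT, setT).

Definition complS (T : Type) (x y : triple T) : Prop :=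
  [/\ inS y, meetS x y = botS T & joinS x y = topS T].

(* Main.v *)
Require Import Defs.
From mathcomp Require Import all_boot.
From mathcomp Require Import boolp classical_sets cardinality.
Local Open Scope classical_set_scope.

Theorem lemma5p4 (T : Type) (hT : infinite_set [set: T])
  (A B C A' B' C' : set T) :
  inS (A, B, C) -> ~ inB0 (A, B, C) ->
  complS (A, B, C) (A', B', C') ->
  B `<=` A -> ~ (B' `<=` A').
Proof.
move=> [fA fB fC [bal1 bal2] fCm] nB0 [[fA' fB' fC' [bal1' bal2'] fCm'] hm hj] BA B'A'.
move: hm; rewrite /meetS /botS => -[AA' _ _].
move: hj; rewrite /joinS /topS => -[_ hj2 _].
have muB : mu A B C `<=` B.
  move=> x [[[ax bx]|[ax cx]]|[bx cx]] //.
  by have : (A `&` C) x by []; rewrite -bal1 => -[].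
have muB' : mu A' B' C' `<=` B'.
  move=> x [[[ax bx]|[ax cx]]|[bx cx]] //.
  by have : (A' `&` C') x by []; rewrite -bal1' => -[].
have BC : B `<=` C.
  move=> x bx; have : (A `&` C) x by rewrite -bal1; split => //; exact: BA.
  by case.
have Cfin : finite_set C /\ finite_set (~` A).
  have hs : ~ simF A C.
    move=> hs; apply: nB0; exists A, C; split => //.
    congr (_, _, _); rewrite eqEsubset; split.
      by move=> x bx; split; [exact: BA | exact: BC].
    by move=> x [ax cx]; have : (A `&` C) x by []; rewrite -bal1 => -[].
  case: fA => hA; case: fC => hC.
  - by exfalso; apply: hs; left.
  - exfalso; apply: hT.
    apply: (@sub_finite_set _ _ ((~` C) `|` (C `\` mu A B C) `|` A)).
      move=> x _; have [cx|ncx] := pselect (C x); last by left; left.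
      have [mx|nmx] := pselect (mu A B C x); last by left; right.
      by right; apply: BA; apply: muB.
    by rewrite !finite_setU.
  - by [].
  - by exfalso; apply: hs; right.
case: Cfin => Cf nAf.
have B'f : finite_set B'.
  apply: (sub_finite_set _ nAf) => x bx ax.
  have : (A `&` A') x by split => //; exact: B'A'.
  by rewrite AA'.
have C'f : finite_set C'.
  apply: (@sub_finite_set _ _ ((C' `\` mu A' B' C') `|` B')).
    move=> x cx; have [mx|nmx] := pselect (mu A' B' C' x); last by left.
    by right; apply: muB'.
  by rewrite finite_setU.
have Bf : finite_set B by apply: (sub_finite_set BC Cf).
apply: hT; rewrite -hj2.
apply: (@sub_finite_set _ _ (B `|` B' `|` (C `|` C'))).
  move=> x [|[[[? ?]|[? ?]]|[? ?]]]; by [left | right].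
by rewrite !finite_setU.
Qed.
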